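(* Let $p$ be a prime and $G$ a reduced abelian $p$-group. Then every subgroup of $G$ is an essential subgroup of some direct summand of $G$ if, and only if, there exist a positive integer $n$ and index sets $I, J$ such that $$G \cong \Big(\bigoplus_{I} \mathbb{Z}_{p^n}\Big) \oplus \Big(\bigoplus_{J} \mathbb{Z}_{p^{n+1}}\Big),$$ i.e., the Ulm invariants satisfy $f_G(\alpha) = 0$ unless $\alpha \in \{n-1, n\}$. In particular, every such group $G$ is semi-generalized Bassian.
   Context: All groups are additively written abelian groups; $\mathbb{Z}_{p^k}$ denotes the cyclic group of order $p^k$. $f_G(\alpha)$ denotes the $\alpha$-th Ulm–Kaplansky invariant of $G$ (for finite $\alpha$, the number of cyclic summands of order $p^{\alpha+1}$ in a bounded $G$). A subgroup $H$ of a group $A$ is essential in $A$ if $H \cap S \neq \{0\}$ for every non-zero subgroup $S$ of $A$. A group $G$ is semi-generalized Bassian if, for every subgroup $H \le G$, the existence of an injective homomorphism $G \to G/H$ implies that $H$ is an essential subgroup of some direct summand of $G$. *)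

(* Defs.v *)
From mathcomp Require Import all_boot all_order all_algebra.
Set Implicit Arguments. Unset Strict Implicit. Unset Printing Implicit Defensive.
Import GRing.Theory.
Local Open Scope ring_scope.

Definition is_subgroup (G : zmodType) (S : G -> Prop) : Prop :=
  S 0 /\ (forall x y, S x -> S y -> S (x - y)).

Definition is_p_group (p : nat) (G : zmodType) : Prop :=
  forall x : G, exists k : nat, x *+ (p ^ k)%N = 0.

Definition divisible_sub (G : zmodType) (S : G -> Prop) : Prop :=
  forall x, S x -> forall m : nat, (0 < m)%N -> exists y, S y /\ y *+ m = x.

Definition reduced (G : zmodType) : Prop :=
  forall S : G -> Prop, is_subgroup S -> divisible_sub S -> forall x, S x -> x = 0.

Definition direct_summand (G : zmodType) (A : G -> Prop) : Prop :=
  is_subgroup A /\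
  exists B : G -> Prop, is_subgroup B /\
    (forall x, A x -> B x -> x = 0) /\
    (forall g, exists a b, A a /\ B b /\ g = a + b).

Definition essential_in (G : zmodType) (H A : G -> Prop) : Prop :=
  is_subgroup H /\ is_subgroup A /\ (forall x, H x -> A x) /\
  forall S : G -> Prop, is_subgroup S -> (forall x, S x -> A x) ->
    (exists s, S s /\ s <> 0) -> exists x, S x /\ H x /\ x <> 0.

Definition every_sub_essential_in_summand (G : zmodType) : Prop :=
  forall H : G -> Prop, is_subgroup H ->
    exists A : G -> Prop, direct_summand A /\ essential_in H A.

Definition additive_map (G Q : zmodType) (f : G -> Q) : Prop :=
  forall x y, f (x + y) = f x + f y.

(* G embeds into G/H. The quotient G/H is represented by any group Q with a
   surjective homomorphism pi : G -> Q whose kernel is exactly H. *)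
Definition embeds_in_quotient (G : zmodType) (H : G -> Prop) : Prop :=
  exists (Q : zmodType) (pi : G -> Q) (phi : G -> Q),
    additive_map pi /\ (forall q, exists g, pi g = q) /\
    (forall g, pi g = 0 <-> H g) /\
    additive_map phi /\ injective phi.

Definition semi_generalized_Bassian (G : zmodType) : Prop :=
  forall H : G -> Prop, is_subgroup H -> embeds_in_quotient H ->
    exists A : G -> Prop, direct_summand A /\ essential_in H A.

Definition has_order (G : zmodType) (x : G) (m : nat) : Prop :=
  x *+ m = 0 /\ forall k : nat, (0 < k < m)%N -> x *+ k <> 0.

(* G is the (internal) direct sum of the cyclic subgroups <x k>, k : K:
   every element is a finite Z-combination of the x k (nat coefficients suffice
   since the x k have finite order), and the family is independent. *)
Definition direct_sum_of_cyclics (G : zmodType) (K : Type) (x : K -> G) : Prop :=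
  (forall g : G, exists (m : nat) (f : 'I_m -> K) (c : 'I_m -> nat),
      g = \sum_(i < m) x (f i) *+ c i) /\
  (forall (m : nat) (f : 'I_m -> K) (c : 'I_m -> nat), injective f ->
      \sum_(i < m) x (f i) *+ c i = 0 -> forall i, x (f i) *+ c i = 0).

(* G ≅ (⊕_I Z_{p^n}) ⊕ (⊕_J Z_{p^(n+1)}): G is the internal direct sum of
   cyclic subgroups generated by a family (a i)_{i:I} of elements of order p^n
   and a family (b j)_{j:J} of elements of order p^(n+1). *)
Definition sum_of_cyclics_n_n1 (p n : nat) (G : zmodType) : Prop :=
  exists (I J : Type) (a : I -> G) (b : J -> G),
    (forall i, has_order (a i) (p ^ n)%N) /\
    (forall j, has_order (b j) (p ^ n.+1)%N) /\
    direct_sum_of_cyclics (fun k : I + J => match k with inl i => a i | inr j => b j end).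

(* Main.v *)
Require Import Defs.
From mathcomp Require Import all_boot all_order all_algebra all_solvable.
From mathcomp Require Import boolp classical_sets.
From Stdlib Require Classical_Prop.
Set Implicit Arguments. Unset Strict Implicit. Unset Printing Implicit Defensive.
Import GRing.Theory.
Local Open Scope ring_scope.
Lemma zorn_sub (T : Type) (P : (T -> Prop) -> Prop) (X0 : T -> Prop) :
  P X0 ->
  (forall F : (T -> Prop) -> Prop, (forall X, F X -> P X) ->
     (forall X Y, F X -> F Y -> (forall t, X t -> Y t) \/ (forall t, Y t -> X t)) ->
     (exists X, F X) -> P (fun t => exists X, F X /\ X t)) ->
  exists M, P M /\ (forall t, X0 t -> M t) /\
    forall M', P M' -> (forall t, M t -> M' t) -> forall t, M' t -> M t.
Proof.
move=> PX0 Pch.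
pose Q := fun X : set T => P (fun t => X t \/ X0 t).
have [A [QA Amax]] : exists A, Q A /\ forall B, (A `<` B)%classic -> ~ Q B.
  apply: Zorn_bigcup => F FQ Ftot.
  have [[X FX]|nF] := pselect (exists X, F X); last first.
    rewrite /Q.
    have -> : (fun t => (\bigcup_(X in F) X)%classic t \/ X0 t) = X0.
      apply/funext => t; apply/propext; split; last by right.
      by case=> // -[X FX _]; case: nF; exists X.
    exact: PX0.
  pose F' := fun Y : T -> Prop => exists X, F X /\ Y = (fun t => X t \/ X0 t).
  have := Pch F'.
  have -> : (fun t => exists X, F' X /\ X t) = (fun t => (\bigcup_(X in F) X)%classic t \/ X0 t).
    apply/funext => t; apply/propext; split.
      move=> [Y [[Z [FZ ->]]]] [Zt|X0t]; [left; exists Z => //|by right].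
    case=> [[Z FZ Zt]|X0t].
      by exists (fun t => Z t \/ X0 t); split; [exists Z|left].
    by exists (fun t => X t \/ X0 t); split; [exists X|right].
  apply.
  - by move=> Y [Z [FZ ->]]; exact: FQ.
  - move=> Y1 Y2 [X1 [FX1 ->]] [X2 [FX2 ->]].
    have [h|h] := Ftot _ _ FX1 FX2.
      by left=> t [/h|]; [left|right].
    by right=> t [/h|]; [left|right].
  - by exists (fun t => X t \/ X0 t); exists X.
exists (fun t => A t \/ X0 t); split => //; split; first by move=> t; right.
move=> M' PM' MM' t M't.
have [sub|nsub] := pselect (forall t, M' t -> A t).
  by left; apply: sub.
exfalso; apply: (Amax M').
  split; first by move=> u Au; apply: MM'; left.
  by move=> h; apply: nsub => u /h.
rewrite /Q.
have -> : (fun t => M' t \/ X0 t) = M'.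
  apply/funext => u; apply/propext; split; last by left.
  by case=> // /(fun h => MM' u (or_intror h)).
exact: PM'.
Qed.

Section Basic.
Variable G : zmodType.
Implicit Types (x y : G) (S : G -> Prop).

Lemma subg0 S : is_subgroup S -> S 0. Proof. by case. Qed.
Lemma subgB S x y : is_subgroup S -> S x -> S y -> S (x - y).
Proof. by case=> _ h; apply: h. Qed.
Lemma subgN S x : is_subgroup S -> S x -> S (- x).
Proof. by move=> hS Sx; rewrite -sub0r; apply: subgB => //; apply: subg0. Qed.
Lemma subgD S x y : is_subgroup S -> S x -> S y -> S (x + y).
Proof. by move=> hS Sx Sy; rewrite -[y]opprK; apply: subgB => //; apply: subgN. Qed.
Lemma subgMn S x k : is_subgroup S -> S x -> S (x *+ k).
Proof.
move=> hS Sx; elim: k => [|k IH]; first by rewrite mulr0n; apply: subg0.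
by rewrite mulrS; apply: subgD.
Qed.

Lemma mulrn_mod x m k : x *+ m = 0 -> x *+ k = x *+ (k %% m).
Proof.
move=> hm; rewrite {1}(divn_eq k m) mulrnDr mulnC mulrnA hm mul0rn add0r //.
Qed.

Lemma modinv p c N : prime p -> ~~ (p %| c)%N ->
  exists d, forall x, x *+ (p ^ N) = 0 -> x *+ (c * d) = x.
Proof.
move=> pp ndvd.
have cop : coprime c (p ^ N).
  by apply: coprimeXr; rewrite coprime_sym prime_coprime.
exists (c ^ (totient (p ^ N)).-1)%N => x hx.
have tpos : (0 < totient (p ^ N))%N by rewrite totient_gt0 expn_gt0 prime_gt0.
rewrite -expnS prednK //.
rewrite (mulrn_mod _ hx) (Euler_exp_totient cop) -(mulrn_mod _ hx) mulr1n //.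
Qed.

Definition Adj (M : G -> Prop) (y : G) := fun g => exists m c, M m /\ g = m + y *+ c.

Lemma adj_sub M y k : is_subgroup M -> y *+ k = 0 -> (0 < k)%N -> is_subgroup (Adj M y).
Proof.
move=> hM hy k0; split.
  by exists 0, 0%N; split; [apply: subg0|rewrite mulr0n addr0].
move=> _ _ [m1 [c1 [M1 ->]]] [m2 [c2 [M2 ->]]].
exists (m1 - m2), (c1 + c2 * k.-1)%N; split; first exact: subgB.
have e : y *+ (c2 * k.-1) = - (y *+ c2).
  apply/eqP; rewrite -subr_eq0 opprK -mulrnDr -{2}(muln1 c2) -mulnDr addn1 prednK //.
  by rewrite mulnC mulrnA hy mul0rn.
by rewrite mulrnDr e opprD addrACA.
Qed.

Lemma max_sub p (K X : G -> Prop) N : is_subgroup K -> (forall g : G, g *+ p ^ N = 0) ->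
  (0 < p)%N -> (forall a, K a -> a *+ p = 0 -> X a) ->
  exists M, is_subgroup M /\ (forall a, K a -> M a) /\ (forall a, M a -> a *+ p = 0 -> X a) /\
   forall y, (forall m c, M m -> (m + y *+ c) *+ p = 0 -> X (m + y *+ c)) -> M y.
Proof.
move=> hK hN p0 KX.
pose P := fun M : G -> Prop => is_subgroup M /\ (forall a, K a -> M a) /\ (forall a, M a -> a *+ p = 0 -> X a).
have [M [[hM [KM MX]] [_ Mmax]]] : exists M, P M /\ (forall t, K t -> M t) /\
    forall M', P M' -> (forall t, M t -> M' t) -> forall t, M' t -> M t.
  apply: zorn_sub; first by split => //; split.
  move=> F FP Ftot [X0 FX0]; split; [split|split].
  - by exists X0; split => //; apply: subg0; case: (FP _ FX0).
  - move=> x y [X1 [F1 X1x]] [X2 [F2 X2y]].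
    have [h|h] := Ftot _ _ F1 F2.
      by exists X2; split => //; apply: subgB; [case: (FP _ F2)|apply: h|].
    by exists X1; split => //; apply: subgB; [case: (FP _ F1)| |apply: h].
  - by move=> a Ka; exists X0; split => //; case: (FP _ FX0) => _ [+ _]; apply.
  - by move=> a [X1 [F1 X1a]]; case: (FP _ F1) => _ [_]; apply.
exists M; split => //; split => //; split => // y hy.
have PA : P (Adj M y).
  split; first by apply: (adj_sub hM (hN y)); rewrite expn_gt0 p0.
  split; last by move=> _ [m [c [Mm ->]]]; apply: hy.
  by move=> a /KM Ma; exists a, 0%N; rewrite mulr0n addr0.
apply: (Mmax _ PA).
  by move=> t Mt; exists t, 0%N; rewrite mulr0n addr0.
by exists 0, 1%N; rewrite add0r mulr1n; split => //; apply: subg0.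
Qed.

End Basic.
Section Prop3.
Variables (p n : nat) (G : zmodType).
Hypotheses (pp : prime p) (n0 : (0 < n)%N) (E : forall g : G, g *+ p ^ n.+1 = 0)
  (SS : forall s : G, s *+ p = 0 -> exists t, s = t *+ p ^ n.-1).

Lemma key (M X : G -> Prop) : is_subgroup M -> (forall a, M a -> a *+ p = 0 -> X a) ->
  (forall y, (forall m c, M m -> (m + y *+ c) *+ p = 0 -> X (m + y *+ c)) -> M y) ->
  forall k v x, (k <= n)%N -> M v -> x *+ p ^ k = v -> exists a, M a /\ a *+ p ^ k = v.
Proof.
move=> hM MX Mmax k v x kn Mv xv.
suff: forall e, (e <= k)%N -> forall x, x *+ p ^ k = v -> M (x *+ p ^ e) ->
   exists a, M a /\ a *+ p ^ k = v by move/(_ k (leqnn k) x xv); rewrite xv; apply.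
elim=> [|e IH] ek x' xv' Me; first by exists x'; rewrite expn0 mulr1n in Me.
set x1 := x' *+ p ^ e.
have [Mx1|nMx1] := pselect (M x1); first exact: (IH (ltnW ek) x').
have H1 : ~ (forall m c, M m -> (m + x1 *+ c) *+ p = 0 -> X (m + x1 *+ c)).
  by move=> h; apply: nMx1; apply: Mmax.
move/existsNP: H1 => [m /existsNP [c /not_implyP [Mm /not_implyP [hp nX]]]].
have [pc|pc] := boolP (p %| c)%N.
  exfalso; apply: nX; apply: MX => //; apply: subgD => //.
  rewrite -(divnK pc) mulnC /x1 mulrnA -(mulrnA x') -expnSr.
  exact: subgMn.
have [d hd] := @modinv G p c n.+1 pp pc.
have hd' : forall y : G, y *+ (c * d) = y by move=> y; apply: hd; apply: E.
set a' := - (m *+ d).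
have Ma' : M a' by apply: subgN => //; apply: subgMn.
set s := x1 - a'.
have sE : s = (m + x1 *+ c) *+ d.
  by rewrite mulrnDl -mulrnA hd' /s /a' opprK addrC.
have hs : s *+ p = 0 by rewrite sE -mulrnA mulnC mulrnA hp mul0rn.
have [t ts] := SS hs.
have ken : (e <= n.-1)%N by rewrite -ltnS prednK //; apply: leq_trans kn.
set t' := t *+ p ^ (n.-1 - e).
have ht' : t' *+ p ^ e = s by rewrite /t' -mulrnA -expnD subnK.
have t0 : t' *+ p ^ k = 0.
  have -> : (p ^ k = p ^ e * p ^ (k - e).-1.+1)%N.
    by rewrite -expnD prednK ?subn_gt0 // subnKC // ltnW.
  by rewrite mulrnA ht' expnS mulrnA hs mul0rn.
apply: (IH (ltnW ek) (x' - t')).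
  by rewrite mulrnBl xv' t0 subr0.
by rewrite mulrnBl ht' /s opprB addrC subrK.
Qed.

Definition Plus (X Y : G -> Prop) := fun g => exists x y, X x /\ Y y /\ g = x + y.

Lemma plus_sub X Y : is_subgroup X -> is_subgroup Y -> is_subgroup (Plus X Y).
Proof.
move=> hX hY; split; first by exists 0, 0; rewrite addr0; split; [apply: subg0|split => //; apply: subg0].
move=> _ _ [x1 [y1 [X1 [Y1 ->]]]] [x2 [y2 [X2 [Y2 ->]]]].
exists (x1 - x2), (y1 - y2); split; first exact: subgB.
by split; [exact: subgB|rewrite opprD addrACA].
Qed.

Lemma zero_sub : is_subgroup (fun g : G => g = 0).
Proof. by split => // x y -> ->; rewrite subr0. Qed.

Lemma soc_sub : is_subgroup (fun g : G => g *+ p = 0).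
Proof. by split; [rewrite mul0rn|move=> x y hx hy; rewrite mulrnBl hx hy subr0]. Qed.

Lemma top_mult N (g : G) : g *+ p ^ N = 0 -> g <> 0 ->
  exists j, g *+ p ^ j <> 0 /\ (g *+ p ^ j) *+ p = 0.
Proof.
elim: N => [|N IH]; first by rewrite expn0 mulr1n.
move=> hN g0; have [h|h] := pselect (g *+ p ^ N = 0); first exact: IH.
by exists N; split => //; rewrite -mulrnA -expnSr.
Qed.

Lemma top_mult' (g : G) : g <> 0 -> exists j, g *+ p ^ j <> 0 /\ (g *+ p ^ j) *+ p = 0.
Proof. exact: (top_mult (E g)). Qed.

Lemma compl (X Y : G -> Prop) : is_subgroup X -> is_subgroup Y -> (forall y, Y y -> y *+ p = 0) ->
  exists Z, is_subgroup Z /\ (forall z, Z z -> Y z) /\ (forall z, Z z -> X z -> z = 0) /\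
    (forall y, Y y -> exists x z, X x /\ Z z /\ y = x + z).
Proof.
move=> hX hY Ysoc.
pose P := fun Z : G -> Prop => is_subgroup Z /\ (forall z, Z z -> Y z) /\ (forall z, Z z -> X z -> z = 0).
have [M [[hM [MY MX]] [_ Mmax]]] : exists M, P M /\ (forall t, t = 0 -> M t) /\
    forall M', P M' -> (forall t, M t -> M' t) -> forall t, M' t -> M t.
  apply: zorn_sub.
    split; first exact: zero_sub.
    by split => // z ->; apply: subg0.
  move=> F FP Ftot [X0 FX0]; split; [split|split].
  - by exists X0; split => //; apply: subg0; case: (FP _ FX0).
  - move=> x y [X1 [F1 X1x]] [X2 [F2 X2y]].
    have [h|h] := Ftot _ _ F1 F2.
      by exists X2; split => //; apply: subgB; [case: (FP _ F2)|apply: h|].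
    by exists X1; split => //; apply: subgB; [case: (FP _ F1)| |apply: h].
  - by move=> a [X1 [F1 X1a]]; case: (FP _ F1) => _ [+ _]; apply.
  - by move=> a [X1 [F1 X1a]]; case: (FP _ F1) => _ [_]; apply.
exists M; split => //; split => //; split => // y Yy.
have [//|nd] := pselect (exists x z, X x /\ M z /\ y = x + z).
exfalso; apply: (nd); exists 0, y; split; first exact: subg0.
split; last by rewrite add0r.
have PA : P (Adj M y).
  split; first by apply: (adj_sub hM (Ysoc _ Yy)); apply: prime_gt0.
  split; first by move=> _ [m [c [Mm ->]]]; apply: subgD => //; [apply: MY|apply: subgMn].
  move=> _ [m [c [Mm ->]]] Xmc.
  have [pc|pc] := boolP (p %| c)%N.
    have yc : y *+ c = 0 by rewrite -(divnK pc) mulnC mulrnA Ysoc // mul0rn.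
    by move: Xmc; rewrite yc addr0 => Xm; apply: MX.
  have [d hd] := @modinv G p c 1 pp pc.
  exfalso; apply: nd; exists ((m + y *+ c) *+ d), (- (m *+ d)); split; first exact: subgMn.
  split; first by apply: subgN => //; apply: subgMn.
  by rewrite mulrnDl -mulrnA hd ?expn1 ?Ysoc // addrC addKr.
apply: (Mmax _ PA).
  by move=> t Mt; exists t, 0%N; rewrite mulr0n addr0.
by exists 0, 1%N; rewrite add0r mulr1n; split => //; apply: subg0.
Qed.

Lemma prop_main : every_sub_essential_in_summand G.
Proof.
move=> H hH.
pose V := fun g : G => H g /\ g *+ p = 0.
have hV : is_subgroup V.
  split; first by split; [apply: subg0|rewrite mul0rn].
  by move=> x y [Hx px] [Hy py]; split; [apply: subgB|rewrite mulrnBl px py subr0].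
pose Sn := fun g : G => g *+ p = 0 /\ exists t, g = t *+ p ^ n.
have hSn : is_subgroup Sn.
  split; first by split; [rewrite mul0rn|exists 0; rewrite mul0rn].
  move=> x y [px [tx xE]] [py [ty yE]]; split; first by rewrite mulrnBl px py subr0.
  by exists (tx - ty); rewrite xE yE mulrnBl.
have [W1 [hW1 [W1Sn [W1V W1dec]]]] := compl hV hSn (fun y (h : Sn y) => proj1 h).
have [W2 [hW2 [W2S [W2V W2dec]]]] := compl (plus_sub hV hSn) soc_sub (fun y h => h).
pose W := Plus W1 W2.
have hW : is_subgroup W := plus_sub hW1 hW2.
have Wsoc : forall w, W w -> w *+ p = 0.
  move=> _ [w1 [w2 [/W1Sn [h1 _] [/W2S h2 ->]]]]; by rewrite mulrnDl h1 h2 addr0.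
have VW : forall g, V g -> W g -> g = 0.
  move=> g Vg [w1 [w2 [Ww1 [Ww2 gE]]]].
  have w20 : w2 = 0.
    apply: W2V => //; exists g, (- w1); split => //; split; last by rewrite gE addrC addKr.
    by apply: subgN => //; apply: W1Sn.
  by move: gE; rewrite w20 addr0 => gE; subst g; apply: W1V.
have [A [hA [HA [AV Amax]]]] := @max_sub G p H V n.+1 hH E (prime_gt0 pp)
   (fun a Ha pa => conj Ha pa).
have [B [hB [_ [BW Bmax]]]] := @max_sub G p (fun g => g = 0) W n.+1 zero_sub E (prime_gt0 pp)
   (fun a a0 _ => match esym a0 with erefl => subg0 hW end).
have keyA := key hA AV Amax.
have keyB := key hB BW Bmax.
have WB : forall w, W w -> B w.
  move=> w Ww; apply: Bmax => m c Bm hp.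
  have pw : w *+ p = 0 by apply: Wsoc.
  have pm : m *+ p = 0.
    by move: hp; rewrite mulrnDl -mulrnA mulnC mulrnA pw mul0rn addr0.
  by apply: subgD => //; [apply: BW|apply: subgMn].
have AB0 : forall g, A g -> B g -> g = 0.
  move=> g Ag Bg; apply: Classical_Prop.NNPP => g0.
  have [j [gj0 gjp]] := top_mult' g0.
  apply: gj0; apply: VW.
    by apply: AV => //; apply: subgMn.
  by apply: BW => //; apply: subgMn.
have dec : forall m g, g *+ p ^ m = 0 -> exists a b, A a /\ B b /\ g = a + b.
  elim=> [|m IH] g.
    rewrite expn0 mulr1n => ->; exists 0, 0; rewrite addr0.
    by split; [apply: subg0|split; [apply: subg0|]].
  move=> hg.
  have [nm|mn] := ltnP n m.
    apply: (IH g); rewrite -(subnKC nm) expnD mulrnA E mul0rn //.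
  set s := g *+ p ^ m.
  have ps : s *+ p = 0 by rewrite -mulrnA -expnSr.
  have [v [w [Vv [Ww [tv [tw [sE [vE wE]]]]]]]] : exists v w, V v /\ W w /\
     exists tv tw, s = v + w /\ v = tv *+ p ^ m /\ w = tw *+ p ^ m.
    have [mn'|mn'] := ltnP m n.
      have [u [w2 [[v [sn [Vv [Ssn uE]]]] [W2w2 sE]]]] := W2dec _ ps.
      have [v' [w1 [Vv' [W1w1 snE]]]] := W1dec _ Ssn.
      have Vvv : V (v + v') by apply: subgD.
      have Www : W (w1 + w2) by exists w1, w2.
      exists (v + v'), (w1 + w2); split => //; split => //.
      have [tv tvE] := SS (proj2 Vvv).
      have [tw twE] := SS (Wsoc _ Www).
      have hnm : (n.-1 = (n.-1 - m) + m)%N by rewrite subnK // -ltnS prednK.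
      exists (tv *+ p ^ (n.-1 - m)), (tw *+ p ^ (n.-1 - m)).
      rewrite -!mulrnA -!expnD -hnm -tvE -twE; split => //.
      by rewrite sE uE snE !addrA.
    have mE : m = n by apply/eqP; rewrite eqn_leq mn mn'.
    have Ss : Sn s by split => //; exists g; rewrite /s mE.
    have [v [w1 [Vv [W1w1 sE]]]] := W1dec _ Ss.
    have Sw1 := W1Sn _ W1w1.
    have Sv : Sn v by rewrite (_ : v = s - w1); [apply: subgB|rewrite sE addrK].
    case: Sv => _ [tv tvE]; case: Sw1 => _ [tw twE].
    exists v, w1; split => //; split; first by exists w1, 0; split => //; split; [apply: subg0|rewrite addr0].
    by exists tv, tw; rewrite mE.
  have [a0 [Aa0 a0E]] := keyA m v tv mn (HA _ (proj1 Vv)) (esym vE).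
  have [b0 [Bb0 b0E]] := keyB m w tw mn (WB _ Ww) (esym wE).
  have [a' [b' [Aa' [Bb' gE']]]] : exists a b, A a /\ B b /\ g - a0 - b0 = a + b.
    apply: IH; rewrite !mulrnBl a0E b0E -/s sE.
    by rewrite [v + w]addrC addrK subrr.
  exists (a0 + a'), (b0 + b'); split; first exact: subgD.
  split; first exact: subgD.
  by rewrite -addrA -opprD in gE'; rewrite addrACA -gE' addrC subrK.
exists A; split.
  split => //; exists B; split => //; split => //.
  by move=> g; apply: (dec n.+1); apply: E.
split => //; split => //; split => //.
move=> S' hS' S'A [s [S's s0]].
have [j [sj0 sjp]] := top_mult' s0.
exists (s *+ p ^ j); split; first exact: subgMn.
split => //; apply: (proj1 (AV _ _ sjp)).
by apply: S'A; apply: subgMn.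
Qed.
End Prop3.

Section Merge.
Variable G : zmodType.

Definition ext (K : Type) m (f : 'I_m -> K) (k : K) : 'I_m.+1 -> K :=
  fun j => match @insub nat (fun i => (i < m)%N) 'I_m (val j) with Some j' => f j' | None => k end.

Lemma ext_widen K m (f : 'I_m -> K) k i : ext f k (widen_ord (leqnSn m) i) = f i.
Proof.
rewrite /ext /= insubT; first exact: ltn_ord.
by move=> h; congr f; apply: val_inj.
Qed.

Lemma ext_max K m (f : 'I_m -> K) k : ext f k ord_max = k.
Proof. by rewrite /ext /= insubF // ltnn. Qed.

Lemma ord_cases m (i : 'I_m.+1) : (exists i', i = widen_ord (leqnSn m) i') \/ i = ord_max.
Proof.
have [lt|ge] := ltnP i m.
  by left; exists (Ordinal lt); apply: val_inj.
right; apply: val_inj => /=; apply/eqP; rewrite eqn_leq ge andbT.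
by rewrite -ltnS ltn_ord.
Qed.

Lemma merge (K : Type) (x : K -> G) m (f : 'I_m -> K) (c : 'I_m -> nat) :
  exists m' (f' : 'I_m' -> K) (c' : 'I_m' -> nat), injective f' /\
    \sum_(i < m) x (f i) *+ c i = \sum_(j < m') x (f' j) *+ c' j.
Proof.
elim: m f c => [|m IH] f c.
  exists 0%N, f, c; split; last by [].
  by move=> i; case: i.
have [m' [f' [c' [inj' eq']]]] := IH (fun i => f (widen_ord (leqnSn m) i)) (fun i => c (widen_ord (leqnSn m) i)).
rewrite big_ord_recr /= eq'.
set k := f ord_max; set cc := c ord_max.
have [[j fj]|nj] := pselect (exists j, f' j = k).
  exists m', f', (fun i => c' i + (if i == j then cc else 0))%N; split => //.
  under [RHS]eq_bigr do rewrite mulrnDr.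
  rewrite big_split /=; congr (_ + _).
  rewrite (bigD1 j) //= eqxx big1 ?addr0 -?fj //.
  by move=> i /negbTE ->; rewrite mulr0n.
exists m'.+1, (ext f' k), (ext c' cc); split.
  move=> i1 i2.
  case: (ord_cases i1) => [[i1' ->]|->]; case: (ord_cases i2) => [[i2' ->]|->];
    rewrite ?ext_widen ?ext_max.
  - by move/inj' => ->.
  - by move=> h; case: nj; exists i1'.
  - by move=> h; case: nj; exists i2'.
  - by [].
by rewrite big_ord_recr /= ext_max ext_max; under [in RHS]eq_bigr do rewrite !ext_widen.
Qed.

End Merge.

Lemma order_dvd (G : zmodType) (x : G) N k : (0 < N)%N -> has_order x N -> x *+ k = 0 -> (N %| k)%N.
Proof.
move=> N0 [hN hlt] hk.
rewrite /dvdn; apply: Classical_Prop.NNPP => nz.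
apply: (hlt (k %% N)%N); last by rewrite -(mulrn_mod _ hN).
by apply/andP; split; [rewrite lt0n; apply/negP|rewrite ltn_mod].
Qed.

Lemma expn_gt0' p n : (0 < p)%N -> (0 < p ^ n)%N.
Proof. by move=> h; rewrite expn_gt0 h. Qed.

Lemma basis_ES p n (G : zmodType) : prime p -> (0 < n)%N -> sum_of_cyclics_n_n1 p n G ->
  (forall g : G, g *+ p ^ n.+1 = 0) /\ (forall s : G, s *+ p = 0 -> exists t, s = t *+ p ^ n.-1).
Proof.
move=> pp n0 [I [J [a [b [ha [hb [gen ind]]]]]]].
pose x := (fun k : I + J => match k with inl i => a i | inr j => b j end).
have {}gen : forall g : G, exists (m : nat) (f : 'I_m -> I + J) (c : 'I_m -> nat),
      g = \sum_(i < m) x (f i) *+ c i := gen.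
have {}ind : forall (m : nat) (f : 'I_m -> I + J) (c : 'I_m -> nat), injective f ->
      \sum_(i < m) x (f i) *+ c i = 0 -> forall i, x (f i) *+ c i = 0 := ind.
have p0 := prime_gt0 pp.
have xE : forall k, x k *+ p ^ n.+1 = 0.
  case=> [i|j] /=; last by case: (hb j).
  by rewrite expnSr mulrnA; case: (ha i) => -> _; rewrite mul0rn.
have xdiv : forall k c, x k *+ (c * p) = 0 -> (p ^ n.-1 %| c)%N.
  case=> [i|j] c /= h.
    have := order_dvd (@expn_gt0' p n p0) (ha i) h.
    by rewrite -(prednK n0) expnSr dvdn_pmul2r.
  have := order_dvd (@expn_gt0' p n.+1 p0) (hb j) h.
  rewrite expnSr dvdn_pmul2r // => h2; apply: dvdn_trans h2.
  by apply: dvdn_exp2l; apply: leq_pred.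
split.
  move=> g; have [m [f [c ->]]] := gen g.
  rewrite -sumrMnl big1 // => i _.
  by rewrite -mulrnA mulnC mulrnA xE mul0rn.
move=> s hs; have [m [f [c sE]]] := gen s.
have [m' [f' [c' [inj' eq']]]] := merge x f c.
rewrite eq' in sE.
have h0 : \sum_(j < m') x (f' j) *+ (c' j * p) = 0.
  by rewrite sE -sumrMnl in hs; rewrite -[RHS]hs; apply: eq_bigr => j _; rewrite mulrnA.
have hd := fun j => xdiv _ _ (ind m' f' _ inj' h0 j).
exists (\sum_(j < m') x (f' j) *+ (c' j %/ p ^ n.-1)).
rewrite sE -sumrMnl; apply: eq_bigr => j _.
by rewrite -mulrnA divnK.
Qed.

Lemma hlp (G : zmodType) (a b q : G) : q = a + b + q - a - b.
Proof. by rewrite -addrA -opprD addrAC subrr add0r. Qed.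

Lemma gcd_kill (G : zmodType) (x : G) a b : (0 < a)%N -> x *+ a = 0 -> x *+ b = 0 -> x *+ gcdn a b = 0.
Proof.
move=> a0 ha hb; case: (egcdnP b a0) => km kn e _.
have : x *+ (km * a) = 0 by rewrite mulnC mulrnA ha mul0rn.
by rewrite e mulrnDr mulnC mulrnA hb mul0rn add0r.
Qed.

Lemma ord_p (G : zmodType) p N (x : G) : prime p -> x *+ p ^ N.+1 = 0 -> x *+ p ^ N <> 0 ->
  has_order x (p ^ N.+1).
Proof.
move=> pp h1 h2; split => // k /andP [k0 kN] hk.
have pN : (0 < p ^ N.+1)%N by rewrite expn_gt0 prime_gt0.
have hg := gcd_kill pN h1 hk.
have : (gcdn (p ^ N.+1) k %| p ^ N.+1)%N by apply: dvdn_gcdl.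
case/(dvdn_pfactor _ _ pp) => i iN gE.
have gk : (gcdn (p ^ N.+1) k <= k)%N by apply: dvdn_leq => //; apply: dvdn_gcdr.
have iN' : (i <= N)%N.
  rewrite leqNgt; apply/negP => Ni.
  have ei : i = N.+1 by apply/eqP; rewrite eqn_leq iN Ni.
  by move: gk; rewrite gE ei leqNgt kN.
apply: h2; rewrite -(subnK iN') expnD mulnC mulrnA -gE hg mul0rn //.
Qed.

Lemma min_ex (P : nat -> Prop) : (exists j, P j) -> exists j, P j /\ forall i, (i < j)%N -> ~ P i.
Proof.
move=> [j Pj]; elim: j {-2}j (leqnn j) Pj => [|N IH] j jN Pj.
  exists j; split => // i; move: jN; rewrite leqn0 => /eqP ->; by [].
have [[i [ij Pi]]|h] := pselect (exists i, (i < j)%N /\ P i).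
  by apply: (IH i) => //; rewrite -ltnS; apply: leq_trans jN.
by exists j; split => // i ij Pi; apply: h; exists i.
Qed.

Section Converse.
Variables (p : nat) (G : zmodType).
Hypotheses (pp : prime p) (pG : is_p_group p G) (red : reduced G)
  (prop : every_sub_essential_in_summand G).

Lemma cyc_sub (x : G) : is_subgroup (Adj (fun g => g = 0) x).
Proof.
have [k hk] := pG x; apply: (adj_sub (zero_sub G) hk).
by rewrite expn_gt0 prime_gt0.
Qed.

Lemma step_ii j (y z : G) : (y *+ p ^ j) *+ p = 0 -> (z *+ p ^ j.+2) *+ p = 0 ->
  z *+ p ^ j.+2 <> 0 -> exists t, y *+ p ^ j = t *+ p ^ j.+1.
Proof.
move=> hy hz z0.
set s := z *+ p ^ j.+2.
set x := y + z *+ p.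
have xs : x *+ p ^ j.+1 = s.
  rewrite mulrnDl expnSr [y *+ _]mulrnA hy add0r -mulrnA /s -expnSr -expnS //.
have xo : has_order x (p ^ j.+2).
  apply: ord_p => //; last by rewrite xs.
  by rewrite expnSr mulrnA xs.
have [A [[hA [B [hB [AB dec]]]] [_ [_ [HA ess]]]]] := prop (cyc_sub x).
have Ax : A x by apply: HA; exists 0, 1%N; rewrite add0r mulr1n.
have Asoc : forall a, A a -> a *+ p = 0 -> exists q, a = s *+ q.
  move=> a Aa ap.
  have [->|a0] := pselect (a = 0); first by exists 0%N; rewrite mulr0n.
  have hS : is_subgroup (Adj (fun g => g = 0) a) by apply: (adj_sub (zero_sub G) ap); apply: prime_gt0.
  have hSA : forall g, Adj (fun g => g = 0) a g -> A g.
    by move=> g [m [c [-> ->]]]; rewrite add0r; apply: subgMn.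
  have hne : exists s0, Adj (fun g => g = 0) a s0 /\ s0 <> 0.
    by exists a; split => //; exists 0, 1%N; rewrite add0r mulr1n.
  have [w [[m1 [c [m10 wE]]] [[m2 [c' [m20 wE']]] w0]]] := ess _ hS hSA hne.
  move: wE wE'; rewrite m10 m20 !add0r => wE wE'.
  have pc : ~~ (p %| c)%N.
    apply/negP => /dvdnP [q cq]; apply: w0; rewrite wE cq mulnC mulrnA ap mul0rn //.
  have [d hd] := @modinv G p c 1 pp pc.
  have ad : a = x *+ (c' * d) by rewrite mulrnA -wE' wE -mulrnA hd // expn1.
  have : x *+ (c' * d * p) = 0 by rewrite mulrnA -ad.
  move/(order_dvd (expn_gt0' _ (prime_gt0 pp)) xo).
  rewrite expnSr dvdn_pmul2r ?prime_gt0 // => /dvdnP [q qE].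
  by exists q; rewrite ad qE mulnC mulrnA xs.
have [ya [yb [Aya [Byb yE]]]] := dec y.
have [za [zb [Aza [Bzb zE]]]] := dec z.
have e1 : yb + zb *+ p = 0.
  apply: AB; last by apply: subgD => //; apply: subgMn.
  have -> : yb + zb *+ p = x - ya - za *+ p.
    by rewrite /x yE zE mulrnDl addrACA; apply: hlp.
  by apply: (subgB hA); [apply: (subgB hA)|apply: (subgMn _ hA)].
have ybE : yb = - (zb *+ p) by rewrite -(subr0 yb) -e1 opprD addrA subrr add0r.
have e2 : ya *+ p ^ j.+1 = zb *+ p ^ j.+2.
  rewrite expnSr (_ : p ^ j.+2 = p * (p ^ j * p))%N; last by rewrite -expnSr -expnS.
  by move: hy; rewrite yE ybE -mulrnA mulrnBl -mulrnA => /eqP; rewrite subr_eq0 => /eqP.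
have e3 : ya *+ p ^ j.+1 = 0.
  apply: AB; first by apply: (subgMn _ hA).
  by rewrite e2; apply: (subgMn _ hB).
have Aj : A (ya *+ p ^ j) by apply: (subgMn _ hA).
have pj : (ya *+ p ^ j) *+ p = 0 by rewrite -mulrnA -expnSr.
have [q qE] := Asoc _ Aj pj.
exists (z *+ (p * q) - zb).
rewrite yE ybE mulrnDl qE mulNrn mulrnBl /s -!mulrnA.
have -> : (p ^ j.+2 * q = p * q * p ^ j.+1)%N by rewrite mulnAC -expnS.
by rewrite -expnS.
Qed.

Lemma all_div : (forall s : G, s *+ p = 0 -> forall k, exists t, s = t *+ p ^ k) ->
  forall g : G, g = 0.
Proof.
move=> hs.
have hp : forall m (g : G), g *+ p ^ m = 0 -> exists t, g = t *+ p.
  elim=> [|m IH] g.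
    by rewrite expn0 mulr1n => ->; exists 0; rewrite mul0rn.
  move=> hg; have [w wE] := hs (g *+ p ^ m) ltac:(by rewrite -mulrnA -expnSr) m.+1.
  have [t tE] : exists t, g - w *+ p = t *+ p.
    by apply: IH; rewrite mulrnBl wE -mulrnA -expnS subrr.
  by exists (t + w); rewrite mulrnDl -tE subrK.
have hk : forall k (g : G), exists t, g = t *+ p ^ k.
  elim=> [|k IH] g; first by exists g; rewrite expn0 mulr1n.
  have [t tE] := IH g; have [N hN] := pG t; have [t' t'E] := hp N t hN.
  by exists t'; rewrite tE t'E -mulrnA -expnS.
have hsub : is_subgroup (fun _ : G => True) by split.
suff hdiv : divisible_sub (fun _ : G => True) by move=> g; exact: (red hsub hdiv I).
move=> x _ m m0.
have [u cu mE] := pfactor_coprime pp m0.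
have [w wE] := hk (logn p m) x.
have [N hN] := pG w.
have pu : ~~ (p %| u)%N by rewrite -prime_coprime.
have [d hd] := @modinv G p u N pp pu.
exists (w *+ d); split => //.
by rewrite mE wE -mulrnA mulnA (mulnC d) mulrnA hd.
Qed.

Lemma converse_main : exists n, (0 < n)%N /\ (forall g : G, g *+ p ^ n.+1 = 0) /\
  (forall s : G, s *+ p = 0 -> exists t, s = t *+ p ^ n.-1).
Proof.
have [ex|nex] := pselect (exists j (s : G), s *+ p = 0 /\ s <> 0 /\ ~ exists t, s = t *+ p ^ j.+1); last first.
  have z := all_div.
  have G0 : forall g : G, g = 0.
    apply: all_div => s ps k.
    have [->|s0] := pselect (s = 0); first by exists 0; rewrite mul0rn.
    case: k => [|k]; first by exists s; rewrite expn0 mulr1n.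
    apply: Classical_Prop.NNPP => nt; apply: nex; exists k, s; split => //.
  exists 1%N; split => //; split => [g|s _]; first by rewrite (G0 g) mul0rn.
  by exists 0; rewrite (G0 s) mul0rn.
have [j [[s0 [ps0 [s00 ns0]]] jmin]] := min_ex ex.
have SS : forall s : G, s *+ p = 0 -> exists t, s = t *+ p ^ j.
  move=> s ps.
  have [->|sn0] := pselect (s = 0); first by exists 0; rewrite mul0rn.
  case: j ns0 jmin => [|j'] ns0 jmin; first by exists s; rewrite expn0 mulr1n.
  apply: Classical_Prop.NNPP => nt; apply: (jmin j') => //; exists s; split => //.
exists j.+1; split => //; split => //.
move=> g; apply: Classical_Prop.NNPP => hg.
have [N hN] := pG (g *+ p ^ j.+2).
have [i [hi0 hip]] := top_mult hN hg.
set z := g *+ p ^ i.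
have zE : z *+ p ^ j.+2 = g *+ p ^ j.+2 *+ p ^ i by rewrite -!mulrnA mulnC.
have [t0 t0E] := SS _ ps0.
have [t tE] := @step_ii j t0 z ltac:(by rewrite -t0E) ltac:(by rewrite zE) ltac:(by rewrite zE).
by apply: ns0; exists t; rewrite t0E.
Qed.

End Converse.

Section Bases.
Variables (p : nat) (G : zmodType).
Hypothesis pp : prime p.

Definition Ind (T : G -> Prop) := forall m (f : 'I_m -> G) (c : 'I_m -> nat), injective f ->
  (forall i, T (f i)) -> \sum_(i < m) f i *+ c i = 0 -> forall i, (p %| c i)%N.
Definition Span (T : G -> Prop) (y : G) := exists m (f : 'I_m -> G) (c : 'I_m -> nat),
  (forall i, T (f i)) /\ y = \sum_(i < m) f i *+ c i.

Lemma chain_fin (F : (G -> Prop) -> Prop) :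
  (forall X Y, F X -> F Y -> (forall t, X t -> Y t) \/ (forall t, Y t -> X t)) ->
  (exists X, F X) -> forall m (f : 'I_m -> G), (forall i, exists X, F X /\ X (f i)) ->
  exists X, F X /\ forall i, X (f i).
Proof.
move=> Ftot [X0 FX0]; elim=> [|m IH] f hf; first by exists X0; split => // -[].
have [X1 [F1 h1]] := IH (fun i => f (widen_ord (leqnSn m) i)) (fun i => hf _).
have [X2 [F2 h2]] := hf ord_max.
have [s|s] := Ftot _ _ F1 F2.
  exists X2; split => // i; case: (ord_cases i) => [[i' ->]|->] //; exact: s.
exists X1; split => // i; case: (ord_cases i) => [[i' ->]|->] //; exact: s.
Qed.

Lemma neg_soc (z : G) : z *+ p = 0 -> - z = z *+ p.-1.
Proof.
move=> hz; apply/eqP; by rewrite eq_sym -addr_eq0 -mulrSr (prednK (prime_gt0 pp)) hz.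
Qed.

Lemma span1 (T : G -> Prop) y : T y -> Span T y.
Proof.
by move=> Ty; exists 1%N, (fun _ => y), (fun _ => 1%N); split => //; rewrite big_ord1 mulr1n.
Qed.

Lemma basis_ext (Y T0 : G -> Prop) : is_subgroup Y -> (forall y, Y y -> y *+ p = 0) ->
  (forall t, T0 t -> Y t) -> Ind T0 ->
  exists T, (forall t, T0 t -> T t) /\ (forall t, T t -> Y t) /\ Ind T /\ forall y, Y y -> Span T y.
Proof.
move=> hY Ysoc T0Y IT0.
pose P := fun T : G -> Prop => (forall t, T t -> Y t) /\ Ind T.
have [M [[MY IM] [T0M Mmax]]] : exists M, P M /\ (forall t, T0 t -> M t) /\
    forall M', P M' -> (forall t, M t -> M' t) -> forall t, M' t -> M t.
  apply: zorn_sub; first by split.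
  move=> F FP Ftot Fne; split.
    by move=> t [X [FX Xt]]; case: (FP _ FX) => + _; apply.
  move=> m f c inj hT hs.
  have [X [FX hX]] := chain_fin Ftot Fne hT.
  by case: (FP _ FX) => _ IX; apply: (IX m f c).
exists M; split => //; split => //; split => // y Yy.
have [//|nS] := pselect (Span M y).
exfalso.
have nMy : ~ M y by move=> My; apply: nS; apply: span1.
have PT' : P (fun g => M g \/ g = y).
  split; first by move=> t [/MY|->].
  move=> m f c inj hT hs.
  have [[i0 fi0]|nex] := pselect (exists i0, f i0 = y); last first.
    have hT' : forall i, M (f i) by move=> i; case: (hT i) => // h; case: nex; exists i.
    exact: (IM m f c inj hT').
  rewrite (bigD1_ord i0) //= in hs.
  have Tl : forall i, M (f (lift i0 i)).
    move=> i; case: (hT (lift i0 i)) => // h.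
    by move: (neq_lift i0 i); rewrite -fi0 in h; move/inj: h => ->; rewrite eqxx.
  set rest := \sum_(i < m.-1) f (lift i0 i) *+ c (lift i0 i) in hs.
  have rsoc : rest *+ p = 0.
    rewrite -sumrMnl big1 // => i _.
    by rewrite -mulrnA mulnC mulrnA Ysoc ?mul0rn //; apply: MY.
  have pc0 : (p %| c i0)%N.
    apply/negP => pc.
    have [d hd] := @modinv G p (c i0) 1 pp (introT negP pc).
    apply: nS; exists m.-1, (fun i => f (lift i0 i)), (fun i => c (lift i0 i) * (p.-1 * d))%N.
    split => //.
    have -> : y = (- rest) *+ d.
      by rewrite -(hd y) ?expn1 ?Ysoc // mulrnA -fi0 -[f i0 *+ _]subr0 -hs opprD addrA subrr add0r.
    by rewrite neg_soc // -mulrnA -sumrMnl; apply: eq_bigr => i _; rewrite -mulrnA.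
  have t0 : f i0 *+ c i0 = 0.
    by rewrite -(divnK pc0) mulnC mulrnA fi0 Ysoc // mul0rn.
  rewrite t0 add0r in hs.
  have IMl := IM m.-1 (fun i => f (lift i0 i)) (fun i => c (lift i0 i))
     (fun a b h => lift_inj (inj _ _ h)) Tl hs.
  move=> i; case: (unliftP i0 i) => [j ->|->] //.
apply: nMy; apply: (Mmax _ PT'); first by move=> t Mt; left.
by right.
Qed.

End Bases.

Section Cat.
Variable G : zmodType.
Definition fcat (A : Type) M1 M2 (f1 : 'I_M1 -> A) (f2 : 'I_M2 -> A) (i : 'I_(M1 + M2)) : A :=
  match split i with inl a => f1 a | inr b => f2 b end.

Lemma sum_cat (K : Type) (x : K -> G) M1 M2 (f1 : 'I_M1 -> K) (f2 : 'I_M2 -> K) c1 c2 :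
  \sum_(i < M1) x (f1 i) *+ c1 i + \sum_(i < M2) x (f2 i) *+ c2 i =
  \sum_(i < M1 + M2) x (fcat f1 f2 i) *+ fcat c1 c2 i.
Proof.
rewrite big_split_ord /=; congr (_ + _); apply: eq_bigr => i _; rewrite /fcat.
  by have /= -> := unsplitK (inl _ i : 'I_M1 + 'I_M2).
by have /= -> := unsplitK (inr _ i : 'I_M1 + 'I_M2).
Qed.

Lemma emp (K : Type) : 'I_0 -> K.
Proof. by case. Qed.
End Cat.

Section Struct.
Variables (p n : nat) (G : zmodType).
Hypotheses (pp : prime p) (n0 : (0 < n)%N) (E : forall g : G, g *+ p ^ n.+1 = 0)
  (SS : forall s : G, s *+ p = 0 -> exists t, s = t *+ p ^ n.-1).

Lemma struct_main : sum_of_cyclics_n_n1 p n G.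
Proof.
pose Sn := fun g : G => g *+ p = 0 /\ exists t, g = t *+ p ^ n.
have hSn : is_subgroup Sn.
  split; first by split; [rewrite mul0rn|exists 0; rewrite mul0rn].
  move=> x y [px [tx xE]] [py [ty yE]]; split; first by rewrite mulrnBl px py subr0.
  by exists (tx - ty); rewrite xE yE mulrnBl.
have Ind0 : Ind p (fun _ : G => False) by move=> m f c _ hT _ i; case: (hT i).
have [T1 [_ [T1Sn [IT1 spT1]]]] := basis_ext pp hSn (fun y (h : Sn y) => proj1 h)
   (fun t (f : False) => False_ind _ f) Ind0.
have [T [T1T [TSoc [IT spT]]]] := basis_ext pp (soc_sub p G) (fun y h => h)
   (fun t h => proj1 (T1Sn t h)) IT1.
have Tnz : forall t, T t -> t <> 0.
  move=> t Tt t0.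
  have := IT 1%N (fun _ => t) (fun _ => 1%N) (fun a b _ => etrans (ord1 a) (esym (ord1 b))) (fun _ => Tt).
  rewrite big_ord1 t0 mul0rn => /(_ erefl ord0).
  by rewrite dvdn1 => /eqP p1; move: pp; rewrite p1.
pose I := {t : G | T t /\ ~ T1 t}.
pose J := {t : G | T1 t}.
have ha : forall i : I, exists y, y *+ p ^ n.-1 = proj1_sig i.
  move=> i; have [t tE] := SS (TSoc _ (proj1 (proj2_sig i))); by exists t.
have hb : forall j : J, exists y, y *+ p ^ n = proj1_sig j.
  move=> j; have [_ [t tE]] := T1Sn _ (proj2_sig j); by exists t.
pose a := fun i => projT1 (cid (ha i)).
have aE : forall i, a i *+ p ^ n.-1 = proj1_sig i := fun i => projT2 (cid (ha i)).
pose b := fun j => projT1 (cid (hb j)).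
have bE : forall j, b j *+ p ^ n = proj1_sig j := fun j => projT2 (cid (hb j)).
pose x := (fun k : I + J => match k with inl i => a i | inr j => b j end).
pose tau := (fun k : I + J => match k with inl i => proj1_sig i | inr j => proj1_sig j end).
pose hgt := (fun k : I + J => match k with inl _ => n.-1 | inr _ => n end).
have xt : forall k, x k *+ p ^ hgt k = tau k by case.
have tT : forall k, T (tau k) by case=> [i|j]; [exact: (proj1 (proj2_sig i))|exact: T1T (proj2_sig j)].
have tsoc : forall k, tau k *+ p = 0 by move=> k; apply: TSoc.
have xo : forall k, has_order (x k) (p ^ (hgt k).+1).
  move=> k; apply: ord_p => //; last by rewrite xt; apply: Tnz.
  by rewrite expnSr mulrnA xt tsoc.
have tinj : injective tau.
  case=> [i1|j1] [i2|j2] /= h.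
  - by congr inl; apply: (eq_sig_hprop (fun _ _ _ => Prop_irrelevance _ _)).
  - by exfalso; case: (proj2 (proj2_sig i1)); rewrite h; apply: proj2_sig.
  - by exfalso; case: (proj2 (proj2_sig i2)); rewrite -h; apply: proj2_sig.
  - by congr inr; apply: (eq_sig_hprop (fun _ _ _ => Prop_irrelevance _ _)).
have hgtn : forall k, (n.-1 <= hgt k)%N by case=> //= _; apply: leq_pred.
exists I, J, a, b; split.
  move=> i; have := xo (inl i); rewrite /= prednK //.
split; first by move=> j; apply: (xo (inr j)).
change (direct_sum_of_cyclics x); split.
  suff gen : forall m (g : G), g *+ p ^ m = 0 -> exists (M : nat) (f : 'I_M -> I + J) (c : 'I_M -> nat),
      g = \sum_(i < M) x (f i) *+ c i by move=> g; apply: (gen n.+1).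
  elim=> [|m IH] g.
    rewrite expn0 mulr1n => ->; exists 0%N, (@emp _), (@emp _).
    by rewrite big_ord0.
  move=> hg.
  have [nm|mn] := ltnP n m.
    by apply: IH; rewrite -(subnKC nm) expnD mulrnA E mul0rn.
  set s := g *+ p ^ m.
  have ps : s *+ p = 0 by rewrite -mulrnA -expnSr.
  have [M [f [c [fm sE]]]] : exists M (f : 'I_M -> I + J) (c : 'I_M -> nat),
      (forall i, (m <= hgt (f i))%N) /\ s = \sum_(i < M) tau (f i) *+ c i.
    have [mn'|mn'] := ltnP m n.
      have [M [f1 [c [hf1 sE]]]] := spT _ ps.
      exists M, (fun i => match pselect (T1 (f1 i)) with
                          | left h => inr (exist _ (f1 i) h)
                          | right h => inl (exist _ (f1 i) (conj (hf1 i) h)) end), c.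
      split.
        move=> i; apply: leq_trans (hgtn _).
        by rewrite -ltnS prednK.
      rewrite sE; apply: eq_bigr => i _; by case: pselect.
    have mE : m = n by apply/eqP; rewrite eqn_leq mn mn'.
    have Ss : Sn s by split => //; exists g; rewrite /s mE.
    have [M [f1 [c [hf1 sE]]]] := spT1 _ Ss.
    exists M, (fun i => inr (exist _ (f1 i) (hf1 i))), c; split; first by move=> i; rewrite /= mE.
    by [].
  pose g0 := \sum_(i < M) x (f i) *+ (c i * p ^ (hgt (f i) - m)).
  have g0E : g0 *+ p ^ m = s.
    rewrite sE -sumrMnl; apply: eq_bigr => i _.
    by rewrite -mulrnA -mulnA -expnD subnK // mulnC mulrnA xt.
  have [M' [f' [c' g'E]]] := IH (g - g0) ltac:(by rewrite mulrnBl g0E subrr).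
  exists (M + M')%N, (fcat f f'), (fcat (fun i => c i * p ^ (hgt (f i) - m))%N c').
  by rewrite -sum_cat -/g0 -g'E addrC subrK.
move=> M f c injf.
suff ind : forall N (c : 'I_M -> nat), (forall i, x (f i) *+ c i *+ p ^ N = 0) ->
    \sum_(i < M) x (f i) *+ c i = 0 -> forall i, x (f i) *+ c i = 0.
  by apply: (ind n.+1) => i; rewrite -mulrnA mulnC mulrnA E mul0rn.
elim=> [|N IH] {}c hc hs.
  by move=> i; rewrite -(mulr1n (_ *+ c i)) -(expn0 p) hc.
apply: IH => //.
have hd : forall i, exists e, x (f i) *+ (c i * p ^ N) = tau (f i) *+ e.
  move=> i.
  have h1 : x (f i) *+ (c i * p ^ N * p) = 0 by rewrite -mulnA -expnSr mulrnA hc.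
  have := order_dvd (expn_gt0' _ (prime_gt0 pp)) (xo (f i)) h1.
  rewrite expnSr dvdn_pmul2r ?prime_gt0 // => /dvdnP [e eE].
  by exists e; rewrite eE mulnC mulrnA xt.
pose e := fun i => projT1 (cid (hd i)).
have eE : forall i, x (f i) *+ (c i * p ^ N) = tau (f i) *+ e i := fun i => projT2 (cid (hd i)).
have hs' : \sum_(i < M) tau (f i) *+ e i = 0.
  have := congr1 (fun z => z *+ p ^ N) hs; rewrite /= mul0rn -sumrMnl => h.
  rewrite -[RHS]h; apply: eq_bigr => i _.
  by rewrite -eE mulrnA.
have pe := IT M (fun i => tau (f i)) e (fun a b h => injf _ _ (tinj _ _ h)) (fun i => tT _) hs'.
move=> i; rewrite -mulrnA eE.
by rewrite -(divnK (pe i)) mulnC mulrnA tsoc mul0rn.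
Qed.

End Struct.

Theorem theorem2p9 (p : nat) (G : zmodType) :
  prime p -> is_p_group p G -> reduced G ->
  (every_sub_essential_in_summand G <->
     exists n : nat, (0 < n)%N /\ sum_of_cyclics_n_n1 p n G) /\
  ((exists n : nat, (0 < n)%N /\ sum_of_cyclics_n_n1 p n G) ->
     semi_generalized_Bassian G).
Proof.
move=> pp pG red.
have back : (exists n : nat, (0 < n)%N /\ sum_of_cyclics_n_n1 p n G) ->
    every_sub_essential_in_summand G.
  move=> [n [n0 h]]; have [E SS] := basis_ES pp n0 h.
  exact: prop_main pp n0 E SS.
split; first split.
- move=> P; have [n [n0 [E SS]]] := converse_main pp pG red P.
  by exists n; split => //; exact: struct_main pp n0 E SS.
- exact: back.
- by move=> h H hH _; exact: back h H hH.
Qed.
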